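(* Let $X$ be a real random variable with cumulative distribution function $F$ and assume there exists $\epsilon>0$ with $\mathbb{E}[e^{-\epsilon X}]<\infty$. Let $p(-k)=\int_{-\infty}^{-k}(e^{-k}-e^x)\,dF(x)$. If $k\mapsto-\log F(-k)$ is regularly varying (at $+\infty$), then $k\mapsto-\log p(-k)$ is regularly varying and, as $k\to\infty$, $$-\log p(-k)\sim k-\log F(-k).$$
   Context: A measurable function $g$, positive for large $x$, is regularly varying (at $+\infty$) if there is $\alpha\in\mathbb{R}$ with $\lim_{x\to\infty}g(\lambda x)/g(x)=\lambda^\alpha$ for every $\lambda>0$. $g\sim h$ means $g(k)/h(k)\to1$ as $k\to\infty$. *)

(* Defs.v *)
From HB Require Import structures.
From mathcomp Require Import all_boot all_order all_algebra.
From mathcomp Require Import all_classical all_reals all_analysis.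
Set Implicit Arguments. Unset Strict Implicit. Unset Printing Implicit Defensive.
Import Order.TTheory GRing.Theory Num.Theory.
Import numFieldNormedType.Exports.
Local Open Scope classical_set_scope.
Local Open Scope ring_scope.

Definition regularly_varying (R : realType) (g : R -> R) : Prop :=
  measurable_fun setT g /\
  (\forall x \near +oo, 0 < g x) /\
  exists alpha : R, forall lambda : R, 0 < lambda ->
    (fun x => g (lambda * x) / g x) @ +oo --> lambda `^ alpha.

Definition asym_equiv (R : realType) (g h : R -> R) : Prop :=
  (fun k => g k / h k) @ +oo --> (1 : R).

Definition cdfR d (T : measurableType d) (R : realType) (P : probability T R)
  (X : {RV P >-> R}) (x : R) : R := fine (cdf X x).

Definition pfun d (T : measurableType d) (R : realType) (P : probability T R)
  (X : {RV P >-> R}) (k : R) : R :=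
  fine (\int[distribution P X]_(x in `]-oo, (- k)%R]) (expR (- k) - expR x)%:E)%E.

(* Main.v *)
Require Import Defs.
From HB Require Import structures.
From mathcomp Require Import all_boot all_order all_algebra.
From mathcomp Require Import all_classical all_reals all_analysis.
From mathcomp Require Import ring lra measurable_realfun.
Set Implicit Arguments. Unset Strict Implicit. Unset Printing Implicit Defensive.
Import Order.TTheory GRing.Theory Num.Theory.
Import numFieldNormedType.Exports.
Local Open Scope classical_set_scope.
Local Open Scope ring_scope.

Section S.
Variable R : realType.

Lemma near_pinftyE (P : R -> Prop) :
  (\forall x \near +oo, P x) <-> exists M, forall x, M < x -> P x.
Proof.
split => [[M [_ H]]|[M H]]; exists M => //; split => //; exact: num_real.
Qed.

Lemma cvg_limP (f : R -> R) (l : R) : f @ +oo --> l <->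
  forall e, 0 < e -> exists M, forall x, M < x -> `|l - f x| < e.
Proof.
rewrite cvgrPdist_lt; split => H e e0.
  by have [M [_ HM]] := H e e0; exists M.
by have [M HM] := H e e0; exists M; split => //; exact: num_real.
Qed.

Lemma cvg_scale (f : R -> R) (l lam : R) : 0 < lam -> f @ +oo --> l ->
  (fun x => f (lam * x)) @ +oo --> l.
Proof.
move=> l0 /(cvg_limP f l) H; apply/(cvg_limP (fun x => f (lam * x)) l) => e e0.
have [M HM] := H e e0; exists (M / lam) => x Mx; apply: HM.
by rewrite ltr_pdivrMr // mulrC in Mx.
Qed.


Lemma growth0 (v : R -> R) (K B rho : R) : 0 < K -> 0 <= rho < 1 ->
  (forall x, K <= x -> 0 <= v x) -> (forall x, K <= x <= 2 * K -> v x <= B) ->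
  (forall x, K <= x -> v (2 * x) <= rho * v x) -> v @ +oo --> 0.
Proof.
move=> K0 /andP[r0 r1] v0 vB v2.
have B0 : 0 <= B by apply: le_trans (v0 K (le_refl _)) (vB K _); rewrite lexx /=; lra.
have S : forall n : nat, forall x, K <= x <= 2 ^+ n.+1 * K -> v x <= B.
  elim => [|n IH] x /andP[Kx xle]; first by apply: vB; rewrite Kx; rewrite expr1 in xle.
  have [x2|x2] := leP x (2 * K); first by apply: vB; rewrite Kx.
  have -> : x = 2 * (x / 2) by rewrite mulrC divfK // pnatr_eq0.
  have h1 : K <= x / 2 by rewrite ler_pdivlMr //; lra.
  have h2 : x / 2 <= 2 ^+ n.+1 * K.
    rewrite ler_pdivrMr //; move: xle; rewrite (exprS _ n.+1).
    set a := 2 ^+ n.+1; nra.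
  have := v2 _ h1; have := IH (x / 2) ltac:(by rewrite h1 h2); have := v0 _ h1; nra.
have Sb : forall x, K <= x -> v x <= B.
  move=> x Kx; apply: (S (Num.trunc (x / K))); rewrite Kx /=.
  rewrite -ler_pdivrMr // (le_trans (ltW (truncnS_gt _))) //.
  rewrite -natrX ler_nat; apply: ltnW; exact: ltn_expl.
have T : forall n : nat, forall x, 2 ^+ n * K <= x -> v x <= rho ^+ n * B.
  elim => [|n IH] x xle; first by rewrite expr0 mul1r; apply: Sb; rewrite expr0 mul1r in xle.
  have h0 : 0 < 2 ^+ n :> R by rewrite exprn_gt0.
  have h1 : 2 ^+ n * K <= x / 2.
    rewrite ler_pdivlMr //; move: xle; rewrite exprS.
    set a := 2 ^+ n; nra.
  have h3 : K <= x / 2.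
    apply: le_trans h1; apply: ler_peMl; first exact: ltW.
    apply: exprn_ege1; lra.
  have -> : x = 2 * (x / 2) by rewrite mulrC divfK // pnatr_eq0.
  have := v2 _ h3; have := IH _ h1; have := v0 _ h3; rewrite exprS.
  have : 0 <= rho ^+ n by rewrite exprn_ge0.
  nra.
apply/(cvg_limP v 0) => e e0.
have e1 : 0 < e / (B + 1) by rewrite divr_gt0 //; lra.
have := @cvg_expr R rho; rewrite ger0_norm // => /(_ r1) /cvgrPdist_lt /(_ _ e1) [N _ HN].
have := HN N (leqnn N); rewrite /= sub0r normrN ger0_norm ?exprn_ge0 // => hN.
exists (2 ^+ N * K) => x Mx; rewrite sub0r normrN ger0_norm; last first.
  apply: v0; apply: le_trans (ltW Mx); apply: ler_peMl; first exact: ltW.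
  apply: exprn_ege1; lra.
apply: le_lt_trans (T N x (ltW Mx)) _.
rewrite ltr_pdivlMr in hN; last by lra.
have : 0 <= rho ^+ N by rewrite exprn_ge0.
nra.
Qed.


Lemma ev2 (P Q : R -> Prop) : (exists M, forall x, M < x -> P x) ->
  (exists M, forall x, M < x -> Q x) -> exists M, forall x, M < x -> P x /\ Q x.
Proof.
move=> [M1 H1] [M2 H2]; exists (Num.max M1 M2) => x; rewrite gt_max => /andP[h1 h2].
by split; [exact: H1|exact: H2].
Qed.

Lemma evR (P : R -> Prop) (M0 : R) : (exists M, forall x, M < x -> P x) ->
  exists M, M0 <= M /\ forall x, M < x -> P x.
Proof.
move=> [M1 H1]; exists (Num.max M1 M0); split; first by rewrite le_max lexx orbT.
by move=> x; rewrite gt_max => /andP[h1 h2]; exact: H1.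
Qed.

Lemma le_of_eq (x y : R) : x = y -> x <= y. Proof. by move->. Qed.

Lemma div_le_div (x y z : R) : 0 < x -> x <= y -> 0 <= z -> z / y <= z / x.
Proof.
move=> x0 xy z0; apply: ler_wpM2l => //.
by rewrite lef_pV2 ?posrE //; apply: lt_le_trans xy.
Qed.

Lemma two_pow_gt (a : R) : 1 < a -> 2 < 2 `^ a.
Proof.
move=> a1; rewrite /powR ifF; last by apply/negbTE; rewrite pnatr_eq0.
rewrite -[X in X < _](@lnK R 2) ?posrE // ltr_expR.
have : 0 < ln (2 : R) by apply: ln_gt0; lra.
nra.
Qed.

Lemma two_pow_lt (a : R) : a < 1 -> 2 `^ a < 2.
Proof.
move=> a1; rewrite /powR ifF; last by apply/negbTE; rewrite pnatr_eq0.
rewrite -[X in _ < X](@lnK R 2) ?posrE // ltr_expR.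
have : 0 < ln (2 : R) by apply: ln_gt0; lra.
nra.
Qed.

Section Main.
Variables (g : R -> R) (a : R).
Hypothesis Ha : forall lam, 0 < lam -> (fun x => g (lam * x) / g x) @ +oo --> lam `^ a.
Hypothesis gpos : exists M, forall x, M < x -> 0 < g x.
Hypothesis gmono : {homo g : x y / x <= y}.

Lemma pick_lam e : 0 < e -> exists2 lam, 1 < lam & lam `^ a < 1 + e.
Proof.
move=> e0; have [a0|a0] := leP a 0.
  exists 2; first lra.
  have h2 : (1:R) <= 2 by lra.
  have := ler_powR h2 a0; rewrite powRr0; lra.
exists ((1 + e / 2) `^ a^-1).
  rewrite /powR ifF; last by apply/negbTE; rewrite gt_eqF //; lra.
  rewrite -[X in X < _]expR0 ltr_expR; apply: mulr_gt0; first by rewrite invr_gt0.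
  apply: ln_gt0; lra.
rewrite -powRrM mulVf ?gt_eqF // powRr1; lra.
Qed.

Lemma g_shift1 : (fun k => g (k + 1) / g k) @ +oo --> (1 : R).
Proof.
apply/(cvg_limP (fun k => g (k + 1) / g k) 1) => e e0.
have [lam lam1 lame] := pick_lam e0.
have := Ha (lt_trans ltr01 lam1) => /(cvg_limP (fun x => g (lam * x) / g x)) /(_ (1 + e - lam `^ a)).
rewrite subr_gt0 => /(_ lame) H1.
have [M [M0 HM]] := evR (1 / (lam - 1)) (ev2 H1 gpos).
exists M => x Mx; have [h1 h2] := HM x Mx.
have x1 : x + 1 <= lam * x.
  have : 1 / (lam - 1) < x by apply: le_lt_trans Mx.
  rewrite ltr_pdivrMr ?subr_gt0 //; lra.
have r1 : 1 <= g (x + 1) / g x by rewrite ler_pdivlMr // mul1r; apply: gmono; lra.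
have r2 : g (x + 1) / g x <= g (lam * x) / g x.
  by rewrite ler_pM2r ?invr_gt0 //; apply: gmono.
rewrite distrC ger0_norm; last lra.
move: h1; rewrite ltr_norml; lra.
Qed.


Lemma u_to0 : 1 < a -> (fun x => x / g x) @ +oo --> 0.
Proof.
move=> a1; set A := 2 `^ a; have A2 : 2 < A := two_pow_gt a1.
set rho := (1 + 2 / A) / 2.
have A0 : 0 < A by lra.
have hr : 2 / A < 1 by rewrite ltr_pdivrMr //; lra.
have hr0 : 0 < 2 / A by rewrite divr_gt0.
have rho0 : 0 < rho by rewrite /rho; lra.
have rho1 : rho < 1 by rewrite /rho; lra.
have hs : 2 / rho < A.
  have e : A * rho = (A + 2) / 2 by rewrite /rho; field; rewrite gt_eqF.
  by rewrite ltr_pdivrMr // e; lra.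
have := Ha (_ : 0 < 2) => /(_ ltac:(lra)) /(cvg_limP (fun x => g (2 * x) / g x)) /(_ (A - 2 / rho)).
rewrite subr_gt0 => /(_ hs) H1.
have [M [M0 HM]] := evR 0 (ev2 H1 gpos).
have pos : forall x, M + 1 <= x -> 0 < x /\ 0 < g x /\ 2 / rho < g (2 * x) / g x.
  move=> x xM; have /HM [h1 h2] : M < x by lra.
  split; first lra; split => //; move: h1; rewrite -/A ltr_norml; lra.
apply: (growth0 (K := M + 1) (B := 2 * (M + 1) / g (M + 1)) (rho := rho)).
- lra.
- by rewrite (ltW rho0) rho1.
- move=> x /pos [x0 [gx _]]; by rewrite divr_ge0 // ltW.
- move=> x /andP[Kx x2K]; have [K0 [gK _]] := pos _ (le_refl _).
  have [x0 [gx _]] := pos _ Kx.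
  apply: le_trans (div_le_div _ _ _) _; [exact: gK|exact: gmono|exact: ltW|].
  by rewrite ler_pM2r ?invr_gt0.
- move=> x Kx; have [x0 [gx h]] := pos _ Kx.
  have g2 : 0 < g (2 * x) by apply: (lt_le_trans gx); apply: gmono; lra.
  rewrite ltr_pdivlMr // in h.
  apply: le_trans (div_le_div _ (ltW h) _) _.
  + by rewrite mulr_gt0 // divr_gt0.
  + lra.
  + apply: le_of_eq; field; rewrite ?gt_eqF //.
Qed.

Lemma w_to0 : a < 1 -> (fun x => g x / x) @ +oo --> 0.
Proof.
move=> a1; set A := 2 `^ a; have A2 : A < 2 := two_pow_lt a1.
have A0 : 0 < A by apply: powR_gt0.
set rho := (1 + A / 2) / 2.
have rho0 : 0 < rho by rewrite /rho; lra.
have rho1 : rho < 1 by rewrite /rho; lra.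
have hs : A < 2 * rho by rewrite /rho; lra.
have := Ha (_ : 0 < 2) => /(_ ltac:(lra)) /(cvg_limP (fun x => g (2 * x) / g x)) /(_ (2 * rho - A)).
rewrite subr_gt0 => /(_ hs) H1.
have [M [M0 HM]] := evR 0 (ev2 H1 gpos).
have pos : forall x, M + 1 <= x -> 0 < x /\ 0 < g x /\ g (2 * x) / g x < 2 * rho.
  move=> x xM; have /HM [h1 h2] : M < x by lra.
  split; first lra; split => //; move: h1; rewrite -/A ltr_norml; lra.
apply: (growth0 (K := M + 1) (B := g (2 * (M + 1)) / (M + 1)) (rho := rho)).
- lra.
- by rewrite (ltW rho0) rho1.
- move=> x /pos [x0 [gx _]]; by rewrite divr_ge0 // ltW.
- move=> x /andP[Kx x2K]; have [K0 [gK _]] := pos _ (le_refl _).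
  have [x0 [gx _]] := pos _ Kx.
  apply: le_trans (div_le_div _ _ _) _; [exact: K0|exact: Kx|exact: ltW|].
  rewrite ler_pM2r ?invr_gt0 //; exact: gmono.
- move=> x Kx; have [x0 [gx h]] := pos _ Kx.
  rewrite ltr_pdivrMr // in h.
  rewrite ler_pdivrMr; last lra.
  apply: le_trans (ltW h) _.
  apply: le_of_eq; field; rewrite ?gt_eqF //.
Qed.


Lemma cvg_ratio1 (r : R -> R) (lam : R) : 0 < lam -> r @ +oo --> 0 ->
  (fun x => (1 + r (lam * x)) / (1 + r x)) @ +oo --> (1 : R).
Proof.
move=> l0 r0.
have h1 : (fun x => 1 + r (lam * x)) @ +oo --> (1 + 0 : R).
  apply: cvgD; [exact: cvg_cst|exact: cvg_scale].
have h2 : (fun x => 1 + r x) @ +oo --> (1 + 0 : R).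
  apply: cvgD; [exact: cvg_cst|exact: r0].
rewrite addr0 in h1 h2.
have := cvgM h1 (cvgV (oner_neq0 _) h2); rewrite invr1 mulr1; exact.
Qed.

Definition beta := if 1 < a then a else 1.

Lemma h_ratio (lam : R) : 0 < lam ->
  (fun x => (lam * x + g (lam * x)) / (x + g x)) @ +oo --> lam `^ beta.
Proof.
move=> l0; have [Mg HMg] := gpos.
have ev : exists M, forall x, M < x -> 0 < x /\ 0 < g x /\ 0 < g (lam * x).
  exists (Num.max (Num.max Mg 0) (Mg / lam)) => x; rewrite !gt_max => /andP[/andP[h1 h2] h3].
  split => //; split; first exact: HMg.
  by apply: HMg; rewrite ltr_pdivrMr // mulrC in h3.
have [M HM] := ev.
rewrite /beta; case: (ltgtP a 1) => [a1|a1|a1].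
-
  rewrite powRr1; last exact: ltW.
  have H : (fun x => lam * ((1 + g (lam * x) / (lam * x)) / (1 + g x / x))) @ +oo --> lam * 1.
    by apply: cvgM; [exact: cvg_cst | exact: cvg_ratio1 l0 (w_to0 a1)].
  rewrite mulr1 in H.
  apply: (cvg_trans _ H); apply: near_eq_cvg; apply/near_pinftyE; exists M => x /HM [x0 [gx glx]] /=.
  by field; rewrite !gt_eqF ?addr_gt0.
-
  have H : (fun x => (g (lam * x) / g x) * ((1 + (lam * x) / g (lam * x)) / (1 + x / g x)))
     @ +oo --> lam `^ a * 1.
    by apply: cvgM; [exact: Ha | exact: cvg_ratio1 l0 (u_to0 a1)].
  rewrite mulr1 in H.
  apply: (cvg_trans _ H); apply: near_eq_cvg; apply/near_pinftyE; exists M => x /HM [x0 [gx glx]] /=.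
  have lx0 : 0 < lam * x by rewrite mulr_gt0.
  by field; rewrite !gt_eqF ?addr_gt0.
-
  rewrite powRr1; last exact: ltW.
  have := Ha l0; rewrite a1 powRr1; last exact: ltW.
  move=> /(cvg_limP (fun x => g (lam * x) / g x)) H.
  apply/(cvg_limP (fun x => (lam * x + g (lam * x)) / (x + g x))) => e e0.
  have [M1 HM1] := ev2 (H e e0) ev.
  exists M1 => x /HM1 [h1 [x0 [gx glx]]].
  have -> : lam - (lam * x + g (lam * x)) / (x + g x) =
            (lam - g (lam * x) / g x) * (g x / (x + g x)).
    field; rewrite !gt_eqF //; lra.
  rewrite normrM (ger0_norm (_ : 0 <= g x / (x + g x))); last first.
    by rewrite divr_ge0 //; lra.
  have : g x / (x + g x) <= 1 by rewrite ler_pdivrMr; lra.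
  have : 0 <= g x / (x + g x) by rewrite divr_ge0 //; lra.
  have := normr_ge0 (lam - g (lam * x) / g x).
  nra.
Qed.

Lemma main_real (q : R -> R) (c : R) : {homo q : x y / x <= y} -> 0 <= c ->
  (forall k, k + g k <= q k) -> (forall k, q k <= k + c + g (k + 1)) ->
  (measurable_fun setT q /\ (\forall x \near +oo, 0 < q x) /\
  exists beta : R, forall lambda : R, 0 < lambda ->
    (fun x => q (lambda * x) / q x) @ +oo --> lambda `^ beta) /\
  (fun k => q k / (k + g k)) @ +oo --> (1 : R).
Proof.
move=> qmono c0 qlo qup.
have [Mg HMg] := gpos.
have hpos : forall x, Num.max Mg 0 < x -> 0 < x /\ 0 < g x /\ 0 < x + g x /\ 0 < q x.
  move=> x; rewrite gt_max => /andP[h1 h2]; have := HMg _ h1; have := qlo x; lra.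
have asym : (fun k => q k / (k + g k)) @ +oo --> (1 : R).
  apply/(cvg_limP (fun k => q k / (k + g k)) 1) => e e0.
  have e2 : 0 < e / 2 by lra.
  have ev3 : exists M, forall x, M < x -> 2 * c < e * x.
    by exists (2 * c / e) => x h; rewrite ltr_pdivrMr // in h; rewrite [e * x]mulrC.
  have [M1 HM1] := ev2 ((cvg_limP _ _).1 g_shift1 _ e2) (ev2 (ex_intro _ _ hpos) ev3).
  exists M1 => x /HM1 [h1 [[x0 [gx [hx qx]]] h3]].
  have lo := qlo x; have up := qup x.
  set t := g (x + 1) / g x in h1.
  have gt : g (x + 1) = t * g x by rewrite /t divfK ?gt_eqF.
  rewrite gt in up.
  have qh : 1 <= q x / (x + g x) by rewrite ler_pdivlMr // mul1r.
  rewrite distrC ger0_norm; last lra.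
  have : q x / (x + g x) < 1 + e by rewrite ltr_pdivrMr //; move: h1; rewrite ltr_norml; nra.
  lra.
split => //; split; first exact: nondecreasing_measurable.
split.
  by apply/near_pinftyE; exists (Num.max Mg 0) => x /hpos [_ [_ [_ ->]]].
exists beta => lam l0.
have H : (fun x => q (lam * x) / (lam * x + g (lam * x)) *
     ((lam * x + g (lam * x)) / (x + g x)) * (q x / (x + g x))^-1) @ +oo -->
     1 * lam `^ beta * 1^-1.
  apply: cvgM; first by apply: cvgM; [exact: (cvg_scale l0 asym)|exact: h_ratio].
  exact: (cvgV (oner_neq0 _) asym).
rewrite mul1r invr1 mulr1 in H.
apply: (cvg_trans _ H); apply: near_eq_cvg; apply/near_pinftyE.
exists (Num.max (Num.max Mg 0) (Num.max Mg 0 / lam)) => x; rewrite gt_max => /andP[h1 h2].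
have [x0 [gx [hx qx]]] := hpos _ h1.
have [lx0 [glx [hlx qlx]]] : 0 < lam * x /\ 0 < g (lam * x) /\ 0 < lam * x + g (lam * x) /\ 0 < q (lam * x).
  by apply: hpos; rewrite ltr_pdivrMr // mulrC in h2.
rewrite /=; field; rewrite !gt_eqF //.
Qed.

End Main.

End S.
Section Prob.
Context d (T : measurableType d) (R : realType) (P : probability T R) (X : {RV P >-> R}).
Local Notation mu := (distribution P X).

Lemma mexp (k : R) (D : set R) : measurable_fun D (fun x => (expR (- k) - expR x)%:E).
Proof.
apply/(measurable_EFinP D (fun x => expR (- k) - expR x)); apply: measurable_funB.
  exact: measurable_cst.
exact: (measurable_funTS (@measurable_expR R)).
Qed.

Lemma cdf_fin x : cdf X x \is a fin_num.
Proof. by rewrite /cdf fin_num_measure. Qed.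

Lemma cdfR_EFin x : (cdfR X x)%:E = cdf X x.
Proof. by rewrite /cdfR fineK // cdf_fin. Qed.

Lemma cdfR_ge0 x : 0 <= cdfR X x.
Proof. by rewrite -lee_fin cdfR_EFin cdf_ge0. Qed.

Lemma cdfR_le1 x : cdfR X x <= 1.
Proof. by rewrite -lee_fin cdfR_EFin cdf_le1. Qed.

Lemma cdfR_mono : {homo cdfR X : x y / x <= y}.
Proof. by move=> x y xy; rewrite -lee_fin !cdfR_EFin cdf_nondecreasing. Qed.

Definition II (k : R) := (\int[mu]_(x in `]-oo, (- k)%R]) (expR (- k) - expR x)%:E)%E.

Lemma II_ge0 k : (0 <= II k)%E.
Proof.
apply: integral_ge0 => x; rewrite /= in_itv /= => xk.
by rewrite lee_fin subr_ge0 ler_expR.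
Qed.

Lemma II_le k : (II k <= (expR (- k) * cdfR X (- k))%:E)%E.
Proof.
apply: (@le_trans _ _ (\int[mu]_(x in `]-oo, (- k)%R]) cst (expR (- k))%:E x)%E).
  apply: ge0_le_integral.
  - exact: measurable_itv.
  - move=> x; rewrite /= in_itv /= => xk.
    by rewrite lee_fin subr_ge0 ler_expR.
  - exact: mexp.
  - exact: measurable_cst.
  - move=> x _; rewrite lee_fin lerBlDr lerDl; exact: ltW (expR_gt0 _).
by rewrite integral_cst // EFinM cdfR_EFin.
Qed.

Lemma II_fin k : II k \is a fin_num.
Proof.
by rewrite ge0_fin_numE ?II_ge0 // (le_lt_trans (II_le k)) // ltry.
Qed.

Lemma pfunE k : (pfun X k)%:E = II k.
Proof. by rewrite /pfun fineK // II_fin. Qed.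

Lemma pfun_le k : pfun X k <= expR (- k) * cdfR X (- k).
Proof. by rewrite -lee_fin pfunE II_le. Qed.

Lemma pfun_ge k : (expR (- k) - expR (- (k + 1))) * cdfR X (- (k + 1)) <= pfun X k.
Proof.
rewrite -lee_fin pfunE.
have sub : `]-oo, (- (k + 1))%R] `<=` `]-oo, (- k)%R].
  by move=> x; rewrite /= !in_itv /= => xk; lra.
apply: (@le_trans _ _ (\int[mu]_(x in `]-oo, (- (k + 1))%R]) (expR (- k) - expR x)%:E)%E); last first.
  apply: ge0_subset_integral; [exact: measurable_itv|exact: measurable_itv| | |exact: sub]; first exact: mexp.
  move=> x; rewrite /= in_itv /= => xk.
  by rewrite lee_fin subr_ge0 ler_expR.
apply: (@le_trans _ _ (\int[mu]_(x in `]-oo, (- (k + 1))%R]) cst (expR (- k) - expR (- (k + 1)))%:E x)%E).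
  by rewrite integral_cst // EFinM cdfR_EFin.
apply: ge0_le_integral.
- exact: measurable_itv.
- move=> x _; rewrite lee_fin subr_ge0 ler_expR; lra.
- exact: measurable_cst.
- exact: mexp.
- move=> x; rewrite /= in_itv /= => xk.
  by rewrite lee_fin lerB // ler_expR.
Qed.

Lemma pfun_anti k1 k2 : k1 <= k2 -> pfun X k2 <= pfun X k1.
Proof.
move=> k12; rewrite -lee_fin !pfunE.
have sub : `]-oo, (- k2)%R] `<=` `]-oo, (- k1)%R].
  by move=> x; rewrite /= !in_itv /= => xk; lra.
apply: (@le_trans _ _ (\int[mu]_(x in `]-oo, (- k2)%R]) (expR (- k1) - expR x)%:E)%E).
  apply: ge0_le_integral.
  - exact: measurable_itv.
  - move=> x; rewrite /= in_itv /= => xk.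
    by rewrite lee_fin subr_ge0 ler_expR.
  - exact: mexp.
  - exact: mexp.
  - move=> x _; rewrite lee_fin lerB // ler_expR; lra.
apply: ge0_subset_integral; [exact: measurable_itv|exact: measurable_itv| | |exact: sub]; first exact: mexp.
move=> x; rewrite /= in_itv /= => xk.
by rewrite lee_fin subr_ge0 ler_expR.
Qed.

End Prob.

Theorem lemma5 (d : measure_display) (T : measurableType d) (R : realType)
  (P : probability T R) (X : {RV P >-> R}) :
  (exists2 eps : R, 0 < eps &
     (\int[P]_w (expR (- eps * X w))%:E < +oo)%E) ->
  regularly_varying (fun k : R => - ln (cdfR X (- k))) ->
  regularly_varying (fun k : R => - ln (pfun X k)) /\
  asym_equiv (fun k : R => - ln (pfun X k))
             (fun k : R => k - ln (cdfR X (- k))).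
Proof.
move=> _ [mg [gpos [a Ha]]].
have [Mg HMg] := (@near_pinftyE R _).1 gpos.
have Fpos : forall k, 0 < cdfR X (- k).
  move=> k; pose x := Num.max k (Mg + 1).
  have hx : Mg < x by rewrite /x lt_max; apply/orP; right; lra.
  have gx := HMg x hx.
  have Fx : 0 < cdfR X (- x).
    by rewrite ltNge; apply/negP => F0; move: gx; rewrite ln0 // oppr0 ltxx.
  apply: (lt_le_trans Fx); apply: cdfR_mono; rewrite lerN2 /x le_max lexx //.
have gmono : {homo (fun k => - ln (cdfR X (- k))) : x y / x <= y}.
  move=> x y xy; rewrite lerN2 ler_ln ?posrE ?Fpos //; apply: cdfR_mono; lra.
have e1 : 0 < 1 - expR (-1) :> R.
  by rewrite subr_gt0 -[X in _ < X]expR0 ltr_expR; lra.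
have ppos : forall k, 0 < pfun X k.
  move=> k; apply: lt_le_trans (pfun_ge X k); apply: mulr_gt0 => //.
  by rewrite subr_gt0 ltr_expR; lra.
have qmono : {homo (fun k => - ln (pfun X k)) : x y / x <= y}.
  by move=> x y xy; rewrite lerN2 ler_ln ?posrE ?ppos //; apply: pfun_anti.
have c0 : 0 <= - ln (1 - expR (-1)) :> R.
  by rewrite oppr_ge0; apply: ln_le0; rewrite lerBlDr lerDl ltW // expR_gt0.
have qlo : forall k, k + - ln (cdfR X (- k)) <= - ln (pfun X k).
  move=> k.
  have : ln (pfun X k) <= ln (expR (- k) * cdfR X (- k)).
    by rewrite ler_ln ?posrE ?mulr_gt0 ?expR_gt0 ?Fpos ?ppos // pfun_le.
  rewrite lnM ?posrE ?expR_gt0 ?Fpos // expRK; lra.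
have qup : forall k, - ln (pfun X k) <= k + - ln (1 - expR (-1)) + - ln (cdfR X (- (k + 1))).
  move=> k.
  have eq : expR (- (k + 1)) = expR (- k) * expR (-1) :> R by rewrite -expRD opprD.
  have : ln (expR (- k) * (1 - expR (-1)) * cdfR X (- (k + 1))) <= ln (pfun X k).
    rewrite ler_ln ?posrE ?mulr_gt0 ?expR_gt0 ?Fpos ?ppos //.
    by rewrite mulrBr mulr1 -eq; exact: pfun_ge.
  rewrite !lnM ?posrE ?mulr_gt0 ?expR_gt0 ?Fpos // expRK; lra.
have := main_real Ha (ex_intro _ Mg HMg) gmono qmono c0 qlo qup.
move=> [[mq [qpos [b Hb]]] asym]; split => //.
split => //; split => //; exists b; exact: Hb.
Qed.
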